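(* Let $X$ be a Dedekind complete Riesz space and let $x,y,v,w\in X^{s}_{+}$ with $x\wedge y=0$ and $v\wedge w=0$. Then $$(x+v)\wedge(y+w)=x\wedge w+y\wedge v,$$ and the two summands $x\wedge w$ and $y\wedge v$ are disjoint.
   Context: For a Dedekind complete Riesz space $X$, its sup-completion $X^{s}$ is the set of classes of nonempty upward directed subsets of $X$ under $A\sim B$ iff $\sup_{a\in A}(x\wedge a)=\sup_{b\in B}(x\wedge b)$ for all $x\in X$, with the induced addition, nonnegative scalar multiplication and order; $X\subseteq X^{s}$. It is a lattice-ordered cone in which every nonempty subset has a supremum; $X^s_+=\{x\in X^s:x\ge0\}$; elements $a,b\in X^s_+$ are disjoint if $a\wedge b=0$. *)

(* Defs.v *)
From HB Require Import structures.
From mathcomp Require Import all_boot all_order all_algebra.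
From mathcomp Require Import boolp classical_sets reals.
From Stdlib Require Import ClassicalEpsilon.

Set Implicit Arguments.
Unset Strict Implicit.
Unset Printing Implicit Defensive.
Import Order.TTheory GRing.Theory Num.Theory.
Local Open Scope classical_set_scope.
Local Open Scope ring_scope.

Section Riesz.
Context {R : realType} {V : lmodType R} (le : V -> V -> Prop).

Definition is_ub (S : set V) (u : V) : Prop := forall s, S s -> le s u.
Definition is_lb (S : set V) (l : V) : Prop := forall s, S s -> le l s.
Definition is_sup (S : set V) (s : V) : Prop :=
  is_ub S s /\ forall u, is_ub S u -> le s u.
Definition is_inf (S : set V) (i : V) : Prop :=
  is_lb S i /\ forall l, is_lb S l -> le l i.

Definition riesz_space : Prop :=
  (forall x, le x x) /\
  (forall x y, le x y -> le y x -> x = y) /\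
  (forall x y z, le x y -> le y z -> le x z) /\
  (forall x y z, le x y -> le (x + z) (y + z)) /\
  (forall (c : R) x y, le x y -> 0 <= c -> le (c *: x) (c *: y)) /\
  (forall x y, exists s, is_sup [set x; y] s).

Definition dedekind_complete : Prop :=
  forall S : set V, S !=set0 -> (exists u, is_ub S u) -> exists s, is_sup S s.

(** Nonempty upward directed subsets of X: representatives of elements of X^s. *)
Definition updirected (A : set V) : Prop :=
  A !=set0 /\
  forall a b, A a -> A b -> exists c, [/\ A c, le a c & le b c].

Definition meetset (x : V) (A : set V) : set V :=
  [set m | exists2 a, A a & is_inf [set x; a] m].

Definition sequiv (A B : set V) : Prop :=
  forall x s t, is_sup (meetset x A) s -> is_sup (meetset x B) t -> s = t.

Definition sle (A B : set V) : Prop :=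
  forall x s t, is_sup (meetset x A) s -> is_sup (meetset x B) t -> le s t.

Definition sadd (A B : set V) : set V :=
  [set c | exists a b, [/\ A a, B b & c = a + b]].

(** Zero of X^s (the image of 0 \in X under X \subseteq X^s). *)
Definition szero : set V := [set 0].

Definition is_smeet (M A B : set V) : Prop :=
  [/\ updirected M, sle M A, sle M B &
      forall L, updirected L -> sle L A -> sle L B -> sle L M].

Definition smeet (A B : set V) : set V :=
  epsilon (inhabits set0) (fun M => is_smeet M A B).

End Riesz.

(* Main.v *)
Require Import Defs.
From HB Require Import structures.
From mathcomp Require Import all_boot all_order all_algebra.
From mathcomp Require Import boolp classical_sets reals.
From Stdlib Require Import ClassicalEpsilon.
Set Implicit Arguments.
Unset Strict Implicit.
Unset Printing Implicit Defensive.
Import GRing.Theory.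
Local Open Scope classical_set_scope.
Local Open Scope ring_scope.

Section Work.
Variables (R : realType) (V : lmodType R) (le : V -> V -> Prop).
Hypothesis lerefl : forall x, le x x.
Hypothesis leanti : forall x y, le x y -> le y x -> x = y.
Hypothesis letrans : forall x y z, le x y -> le y z -> le x z.
Hypothesis leadd : forall x y z, le x y -> le (x + z) (y + z).
Hypothesis hjoin : forall x y : V, exists s, is_sup le [set x; y] s.
Hypothesis hD : dedekind_complete le.

Lemma leD2l x y z : le x y -> le (z + x) (z + y).
Proof. by move=> h; rewrite ![z + _]addrC; apply: leadd. Qed.
Lemma le_add2 a b c d : le a b -> le c d -> le (a + c) (b + d).
Proof. move=> h1 h2; apply: letrans (leadd c h1) _; exact: leD2l. Qed.
Lemma leN x y : le x y -> le (- y) (- x).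
Proof.
move=> h; have := leadd (- x - y) h.
by rewrite addrA subrr add0r addrC subrK.
Qed.
Lemma le_eq x y x' y' : le x y -> x = x' -> y = y' -> le x' y'.
Proof. by move=> h <- <-. Qed.
Lemma le_subl x y z : le (x - y) z -> le x (z + y).
Proof. by move=> h; have := leadd y h; rewrite subrK. Qed.
Lemma le_sub_swap x y z : le (x - z) y -> le (x - y) z.
Proof.
move=> h; have := leadd (z - y) h.
by rewrite addrA subrK [y + _]addrC subrK.
Qed.

Definition jn (a b : V) : V := epsilon (inhabits 0) (fun s => is_sup le [set a; b] s).
Lemma jnP a b : is_sup le [set a; b] (jn a b).
Proof. by rewrite /jn; apply: epsilon_spec; apply: hjoin. Qed.
Lemma le_jnl a b : le a (jn a b).
Proof. by have [ub _] := jnP a b; apply: ub; left. Qed.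
Lemma le_jnr a b : le b (jn a b).
Proof. by have [ub _] := jnP a b; apply: ub; right. Qed.
Lemma jn_lub a b u : le a u -> le b u -> le (jn a b) u.
Proof. by move=> ha hb; have [_ lub] := jnP a b; apply: lub => s [->|->]. Qed.
Lemma jnC a b : jn a b = jn b a.
Proof. by apply: leanti; apply: jn_lub; (apply: le_jnl || apply: le_jnr). Qed.
Lemma jn_mono a b a' b' : le a a' -> le b b' -> le (jn a b) (jn a' b').
Proof.
move=> h1 h2; apply: jn_lub.
  exact: letrans h1 (le_jnl _ _).
exact: letrans h2 (le_jnr _ _).
Qed.

Definition mt (a b : V) : V := a + b - jn a b.
Lemma mt_lel a b : le (mt a b) a.
Proof.
have := leD2l (a - jn a b) (le_jnr a b).
by rewrite subrK addrAC.
Qed.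
Lemma mt_ler a b : le (mt a b) b.
Proof.
have := leadd (b - jn a b) (le_jnl a b).
by rewrite addrA [jn a b + _]addrC subrK.
Qed.
Lemma mt_glb l a b : le l a -> le l b -> le l (mt a b).
Proof.
move=> ha hb.
have h1 : le a (a + b - l).
  by have := leadd (- l) (leD2l a hb); rewrite addrK.
have h2 : le b (a + b - l).
  by have := leadd (- l) (leadd b ha); rewrite [l + b]addrC addrK.
have := leD2l (l - jn a b) (jn_lub h1 h2).
by rewrite subrK [_ + (a + b - l)]addrC addrA subrK.
Qed.
Lemma mtC a b : mt a b = mt b a.
Proof. by rewrite /mt jnC [a + b]addrC. Qed.
Lemma mt_mono a b a' b' : le a a' -> le b b' -> le (mt a b) (mt a' b').
Proof.
move=> h1 h2; apply: mt_glb.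
  exact: letrans (mt_lel _ _) h1.
exact: letrans (mt_ler _ _) h2.
Qed.
Lemma mt_id l a : le l a -> mt l a = l.
Proof. by move=> h; apply: leanti; [apply: mt_lel | apply: mt_glb]. Qed.
Lemma mt_inf_uniq a b m : is_inf le [set a; b] m -> m = mt a b.
Proof.
move=> [lb glb]; apply: leanti.
  by apply: mt_glb; apply: lb; [left|right].
by apply: glb => s [->|->]; [apply: mt_lel | apply: mt_ler].
Qed.
Lemma mt_inf a b : is_inf le [set a; b] (mt a b).
Proof.
split; first by move=> s [->|->]; [apply: mt_lel | apply: mt_ler].
by move=> l hl; apply: mt_glb; apply: hl; [left|right].
Qed.
Lemma mt_pos a b : le 0 a -> le 0 b -> le 0 (mt a b).
Proof. exact: mt_glb. Qed.
Lemma mt_tr x y c : mt (x + c) (y + c) = mt x y + c.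
Proof.
apply: leanti; last by apply: mt_glb; apply: leadd; [apply: mt_lel|apply: mt_ler].
apply: le_subl; apply: mt_glb.
  by have := leadd (- c) (mt_lel (x + c) (y + c)); rewrite addrK.
by have := leadd (- c) (mt_ler (x + c) (y + c)); rewrite addrK.
Qed.

Definition sp (S : set V) : V := epsilon (inhabits 0) (fun s => is_sup le S s).
Lemma spP S : S !=set0 -> (exists u, is_ub le S u) -> is_sup le S (sp S).
Proof. by move=> h1 h2; rewrite /sp; apply: epsilon_spec; apply: hD. Qed.
Lemma sup_uniq S s t : is_sup le S s -> is_sup le S t -> s = t.
Proof. by move=> [u1 l1] [u2 l2]; apply: leanti; [apply: l1|apply: l2]. Qed.

Lemma distr S s c u : is_sup le S s -> (forall t, S t -> le (mt c t) u) ->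
  le (mt c s) u.
Proof.
move=> [ub lub] h.
have hs : le s (u + jn c s - c).
  apply: lub => t St.
  have e : mt c t + jn c t - c = t by rewrite /mt subrK addrC addKr.
  rewrite -e; apply: leadd; apply: le_add2; first exact: h.
  by apply: jn_mono => //; apply: ub.
have := leadd (- jn c s) (leD2l c hs).
by rewrite [c + (_ - c)]addrC subrK addrK.
Qed.
Lemma distr2 x y w : le (mt x (jn y w)) (jn (mt x y) (mt x w)).
Proof.
apply: (@distr [set y; w]); first exact: jnP.
by move=> t [->|->]; [apply: le_jnl | apply: le_jnr].
Qed.

Definition phi (A : set V) (z : V) : V := sp (meetset le z A).
Lemma meetset_in z A a : A a -> meetset le z A (mt z a).
Proof. by move=> h; exists a => //; apply: mt_inf. Qed.
Lemma meetset_inv z A m : meetset le z A m -> exists2 a, A a & m = mt z a.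
Proof. by move=> [a Aa /mt_inf_uniq ->]; exists a. Qed.
Lemma phiP A z : A !=set0 -> is_sup le (meetset le z A) (phi A z).
Proof.
move=> [a Aa]; apply: spP; first by exists (mt z a); apply: meetset_in.
by exists z => m /meetset_inv [b _ ->]; apply: mt_lel.
Qed.
Lemma phi_ge A z a : A a -> le (mt z a) (phi A z).
Proof.
move=> Aa; have [ub _] := phiP z (ex_intro _ a Aa).
by apply: ub; apply: meetset_in.
Qed.
Lemma phi_lub A z u : A !=set0 -> (forall a, A a -> le (mt z a) u) ->
  le (phi A z) u.
Proof.
move=> ne h; have [_ lub] := phiP z ne.
by apply: lub => m /meetset_inv [a Aa ->]; apply: h.
Qed.
Lemma sequivE A B : A !=set0 -> B !=set0 -> (forall z, phi A z = phi B z) ->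
  sequiv le A B.
Proof.
move=> nA nB h z s t hs ht.
by rewrite (sup_uniq hs (phiP z nA)) (sup_uniq ht (phiP z nB)).
Qed.
Lemma sequiv_phi A B : A !=set0 -> B !=set0 -> sequiv le A B ->
  forall z, phi A z = phi B z.
Proof. by move=> nA nB h z; apply: (h z); apply: phiP. Qed.
Lemma sleE A B : A !=set0 -> B !=set0 -> (forall z, le (phi A z) (phi B z)) ->
  sle le A B.
Proof.
move=> nA nB h z s t hs ht.
by rewrite (sup_uniq hs (phiP z nA)) (sup_uniq ht (phiP z nB)).
Qed.
Lemma sle_phi A B : A !=set0 -> B !=set0 -> sle le A B ->
  forall z, le (phi A z) (phi B z).
Proof. by move=> nA nB h z; apply: (h z); apply: phiP. Qed.
Lemma szero_ne : (szero : set V) !=set0.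
Proof. by exists 0. Qed.
Lemma phi_szero z : phi szero z = mt z 0.
Proof.
apply: leanti; last by apply: phi_ge.
by apply: phi_lub; [exact: szero_ne| move=> a ->].
Qed.
Lemma phi_sub A B z : A !=set0 -> B !=set0 -> (forall m, A m -> B m) ->
  le (phi A z) (phi B z).
Proof. by move=> nA nB h; apply: phi_lub => // a /h; apply: phi_ge. Qed.

Definition Pp (A : set V) : set V := [set m | exists2 a, A a & m = jn a 0].
Lemma Pp_ne A : A !=set0 -> Pp A !=set0.
Proof. by move=> [a Aa]; exists (jn a 0); exists a. Qed.
Lemma Pp_pos A m : Pp A m -> le 0 m.
Proof. by move=> [a _ ->]; apply: le_jnr. Qed.
Lemma phi_Pp A z : A !=set0 -> (forall z, le (mt z 0) (phi A z)) ->
  phi (Pp A) z = phi A z.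
Proof.
move=> nA h; apply: leanti.
  apply: phi_lub; first exact: Pp_ne.
  move=> m [a Aa ->]; apply: letrans (distr2 _ _ _) _.
  by apply: jn_lub; [apply: phi_ge|apply: h].
apply: phi_lub => // a Aa.
apply: letrans (phi_ge z (_ : Pp A (jn a 0))); last by exists a.
by apply: mt_mono => //; apply: le_jnl.
Qed.

Definition M0 (A B : set V) : set V :=
  [set m | exists a b, [/\ A a, B b & m = mt a b]].
Lemma M0_ne A B : A !=set0 -> B !=set0 -> M0 A B !=set0.
Proof. by move=> [a Aa] [b Bb]; exists (mt a b); exists a, b. Qed.
Lemma M0_dir A B : updirected le A -> updirected le B -> updirected le (M0 A B).
Proof.
move=> [nA dA] [nB dB]; split; first exact: M0_ne.
move=> _ _ [a1 [b1 [A1 B1 ->]]] [a2 [b2 [A2 B2 ->]]].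
have [a3 [A3 h1 h2]] := dA _ _ A1 A2.
have [b3 [B3 h3 h4]] := dB _ _ B1 B2.
by exists (mt a3 b3); split; [exists a3, b3 | apply: mt_mono | apply: mt_mono].
Qed.
Lemma phi_M0 A B z : A !=set0 -> B !=set0 ->
  phi (M0 A B) z = mt (phi A z) (phi B z).
Proof.
move=> nA nB; apply: leanti.
  apply: phi_lub; first exact: M0_ne.
  move=> _ [a [b [Aa Bb ->]]]; apply: mt_glb.
    apply: letrans (phi_ge z Aa); apply: mt_mono => //; apply: mt_lel.
  apply: letrans (phi_ge z Bb); apply: mt_mono => //; apply: mt_ler.
apply: (distr (phiP z nB)) => _ /meetset_inv [b Bb ->].
rewrite mtC; apply: (distr (phiP z nA)) => _ /meetset_inv [a Aa ->].
apply: letrans (_ : le _ (mt z (mt a b))) _; last first.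
  by apply: phi_ge; exists a, b.
apply: mt_glb; first exact: letrans (mt_lel _ _) (mt_lel _ _).
apply: mt_glb; first exact: letrans (mt_ler _ _) (mt_ler _ _).
exact: letrans (mt_lel _ _) (mt_ler _ _).
Qed.

Lemma dir_ne A : updirected le A -> A !=set0.
Proof. by case. Qed.

Lemma smeetP A B : updirected le A -> updirected le B ->
  is_smeet le (smeet le A B) A B.
Proof.
move=> dA dB; rewrite /smeet; apply: (@epsilon_spec _ (inhabits set0) (fun M => is_smeet le M A B)); exists (M0 A B).
have nA := dir_ne dA; have nB := dir_ne dB.
have nM := M0_ne nA nB.
split; first exact: M0_dir.
- by apply: sleE => // z; rewrite phi_M0 //; apply: mt_lel.
- by apply: sleE => // z; rewrite phi_M0 //; apply: mt_ler.
move=> L dL hA hB; have nL := dir_ne dL.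
apply: sleE => // z; rewrite phi_M0 //; apply: mt_glb; exact: sle_phi.
Qed.
Lemma smeet_dir A B : updirected le A -> updirected le B ->
  updirected le (smeet le A B).
Proof. by move=> dA dB; have [] := smeetP dA dB. Qed.
Lemma phi_smeet A B z : updirected le A -> updirected le B ->
  phi (smeet le A B) z = mt (phi A z) (phi B z).
Proof.
move=> dA dB; have [dS hA hB univ] := smeetP dA dB.
have nA := dir_ne dA; have nB := dir_ne dB; have nS := dir_ne dS.
apply: leanti.
  by apply: mt_glb; apply: sle_phi.
rewrite -phi_M0 //; apply: sle_phi => //; first exact: M0_ne.
apply: univ; first exact: M0_dir.
- by apply: sleE => //; first exact: M0_ne; move=> z'; rewrite phi_M0 //; apply: mt_lel.
- by apply: sleE => //; first exact: M0_ne; move=> z'; rewrite phi_M0 //; apply: mt_ler.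
Qed.

Lemma sadd_ne (A B : set V) : A !=set0 -> B !=set0 -> sadd A B !=set0.
Proof. by move=> [a Aa] [b Bb]; exists (a + b); exists a, b. Qed.
Lemma sadd_dir A B : updirected le A -> updirected le B -> updirected le (sadd A B).
Proof.
move=> [nA dA] [nB dB]; split; first exact: sadd_ne.
move=> _ _ [a1 [b1 [A1 B1 ->]]] [a2 [b2 [A2 B2 ->]]].
have [a3 [A3 h1 h2]] := dA _ _ A1 A2.
have [b3 [B3 h3 h4]] := dB _ _ B1 B2.
by exists (a3 + b3); split; [exists a3, b3 | apply: le_add2 | apply: le_add2].
Qed.
Lemma sadd_mono (A A' B : set V) z : A !=set0 -> A' !=set0 -> B !=set0 ->
  (forall z, le (phi A z) (phi A' z)) ->
  le (phi (sadd A B) z) (phi (sadd A' B) z).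
Proof.
move=> nA nA' nB h; apply: phi_lub; first exact: sadd_ne.
move=> _ [a [b [Aa Bb ->]]].
have e : forall a, mt z (a + b) = mt (z - b) a + b.
  by move=> a'; rewrite -mt_tr subrK.
rewrite e.
have h1 : le (phi A' (z - b)) (phi (sadd A' B) z - b).
  apply: phi_lub => // a' A'a'.
  have := leadd (- b) (phi_ge z (_ : sadd A' B (a' + b))).
  by rewrite e addrK; apply; exists a', b.
apply: letrans (leadd b (letrans (letrans (phi_ge (z - b) Aa) (h (z - b))) h1)) _.
by rewrite subrK; apply: lerefl.
Qed.
Lemma sadd_congl (A A' B : set V) z : A !=set0 -> A' !=set0 -> B !=set0 ->
  (forall z, phi A z = phi A' z) -> phi (sadd A B) z = phi (sadd A' B) z.
Proof.
move=> nA nA' nB h; apply: leanti; apply: sadd_mono => // z'; rewrite h; exact: lerefl.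
Qed.
Lemma saddC (A B : set V) m : sadd A B m -> sadd B A m.
Proof. by move=> [a [b [Aa Bb ->]]]; exists b, a; rewrite addrC. Qed.
Lemma phi_saddC (A B : set V) z : A !=set0 -> B !=set0 ->
  phi (sadd A B) z = phi (sadd B A) z.
Proof.
move=> nA nB; apply: leanti; apply: phi_sub; (exact: sadd_ne || exact: saddC).
Qed.
Lemma sadd_congr (A A' B B' : set V) z : A !=set0 -> A' !=set0 -> B !=set0 ->
  B' !=set0 -> (forall z, phi A z = phi A' z) -> (forall z, phi B z = phi B' z) ->
  phi (sadd A B) z = phi (sadd A' B') z.
Proof.
move=> nA nA' nB nB' h1 h2.
rewrite (sadd_congl z nA nA' nB h1) phi_saddC // (sadd_congl z nB nB' nA' h2).
exact: phi_saddC.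
Qed.

Lemma subadd u p q : le 0 u -> le 0 p -> le 0 q ->
  le (mt u (p + q)) (mt u p + mt u q).
Proof.
move=> hu hp hq; set r := mt u (p + q).
have hq' : le 0 (mt u q) by apply: mt_pos.
have hr : le r u by apply: mt_lel.
have neg : forall c, le 0 c -> le (- c) 0 by move=> c hc; have := leN hc; rewrite oppr0.
apply: le_subl; apply: mt_glb.
  by have := le_add2 hr (neg _ hq'); rewrite addr0.
apply: le_sub_swap; apply: mt_glb.
  by have := le_add2 hr (neg _ hp); rewrite addr0.
have := leadd (- p) (mt_ler u (p + q)).
have e : p + q - p = q by rewrite addrC addKr.
by rewrite e.
Qed.
Lemma key a b c d : le 0 a -> le 0 b -> le 0 c -> le 0 d ->
  mt a b = 0 -> mt c d = 0 -> mt (a + c) (b + d) = mt a d + mt b c.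
Proof.
move=> ha hb hc hd hab hcd.
have hac : le 0 (a + c) by have := le_add2 ha hc; rewrite addr0.
apply: leanti.
  apply: letrans (subadd hac hb hd) _.
  rewrite [mt a d + _]addrC; apply: le_add2.
    rewrite [mt (a + c) b]mtC; apply: letrans (subadd hb ha hc) _.
    by rewrite [mt b a]mtC hab add0r; apply: lerefl.
  rewrite [mt (a + c) d]mtC; apply: letrans (subadd hd ha hc) _.
  by rewrite [mt d c]mtC hcd addr0 [mt d a]mtC; apply: lerefl.
set p := mt a d; set q := mt b c.
have hpq : mt p q = 0.
  apply: leanti; last by apply: mt_pos; apply: mt_pos.
  rewrite -hab; apply: mt_mono; [apply: mt_lel | apply: mt_lel].
have -> : p + q = jn p q by apply: subr0_eq.
have la : forall x y, le 0 y -> le x (x + y).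
  by move=> x y hy; have := leD2l x hy; rewrite addr0.
have lb : forall x y, le 0 x -> le y (x + y).
  by move=> x y hx; have := leadd y hx; rewrite add0r.
apply: jn_lub; apply: mt_glb.
- exact: letrans (mt_lel _ _) (la _ _ hc).
- exact: letrans (mt_ler _ _) (lb _ _ hb).
- exact: letrans (mt_ler _ _) (lb _ _ ha).
- exact: letrans (mt_lel _ _) (la _ _ hd).
Qed.

Lemma disj (A B : set V) a b : A !=set0 -> B !=set0 ->
  (forall z, mt (phi A z) (phi B z) = mt z 0) -> A a -> B b -> le 0 a -> le 0 b ->
  mt a b = 0.
Proof.
move=> nA nB h Aa Bb ha hb.
apply: leanti; last exact: mt_pos.
have h1 : le (mt a b) (phi A (mt a b)).
  by have := phi_ge (mt a b) Aa; rewrite (mt_id (mt_lel a b)).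
have h2 : le (mt a b) (phi B (mt a b)).
  by have := phi_ge (mt a b) Bb; rewrite (mt_id (mt_ler a b)).
by apply: letrans (mt_glb h1 h2) _; rewrite h; apply: mt_ler.
Qed.
Lemma zero4 a b c d : le 0 a -> le 0 b -> le 0 c -> le 0 d -> mt a b = 0 ->
  mt (mt a d) (mt b c) = 0.
Proof.
move=> ha hb hc hd hab; apply: leanti; last by apply: mt_pos; apply: mt_pos.
rewrite -hab; apply: mt_mono; apply: mt_lel.
Qed.

Lemma main (x y v w : set V)
  (dx : updirected le x) (dy : updirected le y)
  (dv : updirected le v) (dw : updirected le w)
  (px : sle le szero x) (py : sle le szero y)
  (pv : sle le szero v) (pw : sle le szero w)
  (hxy : sequiv le (smeet le x y) szero)
  (hvw : sequiv le (smeet le v w) szero) :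
  sequiv le (smeet le (sadd x v) (sadd y w))
            (sadd (smeet le x w) (smeet le y v)) /\
  sequiv le (smeet le (smeet le x w) (smeet le y v)) szero.
Proof.
have nx := dir_ne dx; have ny := dir_ne dy; have nv := dir_ne dv; have nw := dir_ne dw.
have pos : forall A : set V, A !=set0 -> sle le szero A ->
    forall z, le (mt z 0) (phi A z).
  by move=> A nA pA z; rewrite -phi_szero; apply: (sle_phi szero_ne nA pA).
set Xp := Pp x; set Yp := Pp y; set Vp := Pp v; set Wp := Pp w.
have eX : forall z, phi Xp z = phi x z by move=> z; apply: phi_Pp => //; apply: pos.
have eY : forall z, phi Yp z = phi y z by move=> z; apply: phi_Pp => //; apply: pos.
have eV : forall z, phi Vp z = phi v z by move=> z; apply: phi_Pp => //; apply: pos.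
have eW : forall z, phi Wp z = phi w z by move=> z; apply: phi_Pp => //; apply: pos.
have nX : Xp !=set0 by apply: Pp_ne.
have nY : Yp !=set0 by apply: Pp_ne.
have nV : Vp !=set0 by apply: Pp_ne.
have nW : Wp !=set0 by apply: Pp_ne.
have hxy' : forall z, mt (phi Xp z) (phi Yp z) = mt z 0.
  move=> z; rewrite eX eY -phi_smeet // -phi_szero.
  by apply: sequiv_phi => //; [exact: dir_ne (smeet_dir dx dy) | exact: szero_ne].
have hvw' : forall z, mt (phi Vp z) (phi Wp z) = mt z 0.
  move=> z; rewrite eV eW -phi_smeet // -phi_szero.
  by apply: sequiv_phi => //; [exact: dir_ne (smeet_dir dv dw) | exact: szero_ne].
have dXY : forall a b, Xp a -> Yp b -> mt a b = 0.
  by move=> a b Xa Yb; apply: (disj nX nY hxy' Xa Yb); apply: Pp_pos; eassumption.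
have dVW : forall a b, Vp a -> Wp b -> mt a b = 0.
  by move=> a b Xa Yb; apply: (disj nV nW hvw' Xa Yb); apply: Pp_pos; eassumption.
have nxw := dir_ne (smeet_dir dx dw); have nyv := dir_ne (smeet_dir dy dv).
split.
  apply: sequivE.
  - exact: dir_ne (smeet_dir (sadd_dir dx dv) (sadd_dir dy dw)).
  - exact: sadd_ne.
  move=> z; rewrite phi_smeet; [|exact: sadd_dir|exact: sadd_dir].
  rewrite (sadd_congr z nx nX nv nV (fun z => esym (eX z)) (fun z => esym (eV z))).
  rewrite (sadd_congr z ny nY nw nW (fun z => esym (eY z)) (fun z => esym (eW z))).
  rewrite -phi_M0; [|exact: sadd_ne|exact: sadd_ne].
  transitivity (phi (sadd (M0 Xp Wp) (M0 Yp Vp)) z).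
    have nF : M0 (sadd Xp Vp) (sadd Yp Wp) !=set0 by apply: M0_ne; apply: sadd_ne.
    have nG : sadd (M0 Xp Wp) (M0 Yp Vp) !=set0 by apply: sadd_ne; apply: M0_ne.
    apply: leanti; apply: phi_sub => //.
      move=> _ [_ [_ [[a [c [Xa Vc ->]]] [b [d [Yb Wd ->]]] ->]]].
      exists (mt a d), (mt b c); split; [by exists a, d|by exists b, c|].
      apply: key; try (apply: Pp_pos; eassumption); [exact: dXY | exact: dVW].
    move=> _ [_ [_ [[a [d [Xa Wd ->]]] [b [c [Yb Vc ->]]] ->]]].
    exists (a + c), (b + d); split; [by exists a, c|by exists b, d|].
    symmetry; apply: key; try (apply: Pp_pos; eassumption); [exact: dXY | exact: dVW].
  apply: sadd_congr => //; try exact: M0_ne.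
    by move=> z'; rewrite phi_M0 // phi_smeet // eX eW.
  by move=> z'; rewrite phi_M0 // phi_smeet // eY eV.
apply: sequivE; [exact: dir_ne (smeet_dir (smeet_dir dx dw) (smeet_dir dy dv))|exact: szero_ne|].
move=> z; rewrite phi_smeet; [|exact: smeet_dir|exact: smeet_dir].
rewrite !phi_smeet // -eX -eW -eY -eV -!phi_M0 //; try apply: M0_ne => //.
have [a Xa] := nX; have [b Yb] := nY; have [c Vc] := nV; have [d Wd] := nW.
have nH : M0 (M0 Xp Wp) (M0 Yp Vp) !=set0 by apply: M0_ne; apply: M0_ne.
apply: leanti; apply: phi_sub => //; try exact: szero_ne.
  move=> _ [_ [_ [[a' [d' [Xa' Wd' ->]]] [b' [c' [Yb' Vc' ->]]] ->]]].
  by rewrite /szero /=; apply: zero4; try (apply: Pp_pos; eassumption); apply: dXY.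
move=> _ ->; exists (mt a d), (mt b c); split; [by exists a, d|by exists b, c|].
by symmetry; apply: zero4; try (apply: Pp_pos; eassumption); apply: dXY.
Qed.
End Work.

Theorem mainTheorem15 (R : realType) (V : lmodType R) (le : V -> V -> Prop)
  (hX : riesz_space le) (hD : dedekind_complete le)
  (x y v w : set V)
  (dx : updirected le x) (dy : updirected le y)
  (dv : updirected le v) (dw : updirected le w)
  (px : sle le szero x) (py : sle le szero y)
  (pv : sle le szero v) (pw : sle le szero w)
  (hxy : sequiv le (smeet le x y) szero)
  (hvw : sequiv le (smeet le v w) szero) :
  sequiv le (smeet le (sadd x v) (sadd y w))
            (sadd (smeet le x w) (smeet le y v)) /\
  sequiv le (smeet le (smeet le x w) (smeet le y v)) szero.
Proof.
have [h1 [h2 [h3 [h4 [_ h6]]]]] := hX.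
exact: (main h1 h2 h3 h4 h6 hD dx dy dv dw px py pv pw hxy hvw).
Qed.
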